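(* (i) If $y\in\mathcal{SH}(r)$ satisfies $P_1(y)\ne0$ and $P_2(y)\ne0$, then $$\rho(G)y=\{y'\in\mathcal{SH}(r):\ P_1(y)P_1(y')>0\ \text{and}\ P_2(y)P_2(y')>0\}.$$ (ii) Consequently $(G,\rho,\mathcal{SH}(r))$ is a prehomogeneous vector space (it has an open $\rho(G)$-orbit) and its singular set, the complement of the union of the open orbits, is $\Sigma=\{y\in\mathcal{SH}(r):P_1(y)P_2(y)=0\}$.
   Context: Fix an integer $r\ge 2$. For $\ell=1,\dots,r+1$ let $Y_\ell\in\mathrm{Mat}(r,\mathbb R)$ have $(i,j)$-entry $\delta_{i+j,\ell+1}$. Let $\mathcal{SH}(r)=\mathrm{span}_{\mathbb R}(Y_1,\dots,Y_{r+1})$, the space of sub-Hankel matrices: $y=\sum_\ell y_\ell Y_\ell$ is the $r\times r$ matrix whose $(i,j)$-entry is $y_{i+j-1}$ if $i+j\le r+2$ and $0$ otherwise. For $k=0,\dots,r-1$ let $T_k$ be the $r\times r$ matrix with $(i,j)$-entry $(r-k-i+1)\delta_{j,i+k}$. Put $H_1=\frac1rT_0-\frac12I_r$, $H_2=I_r-\frac1rT_0=\mathrm{diag}(0,\frac1r,\dots,\frac{r-1}r)$. Let $\mathfrak g=\mathrm{span}(H_1,H_2,T_1,\dots,T_{r-1})$ (a solvable Lie algebra of upper triangular matrices) and $G\subset GL(r,\mathbb R)$ the connected Lie subgroup with Lie algebra $\mathfrak g$. Define $\rho(g)y=g\,y\,{}^tg$ for $g\in G$, $y\in\mathcal{SH}(r)$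 (this preserves $\mathcal{SH}(r)$). Let $P_1(y)=\det y$ and $P_2(y)=y_{r+1}$. *)

(* Defs.v *)
(* real matrices are needed together with the real exponential
   (matrix exponential), so we work with Stdlib Reals and represent r x r
   matrices as functions nat -> nat -> R, indices 0..r-1 (0-indexed; the paper's
   entry (i,j) is our entry (i-1, j-1)).  Entries outside 0..r-1 are ignored. *)
From Stdlib Require Import Reals Lra Lia Arith.
Open Scope R_scope.

Definition mat := nat -> nat -> R.

Fixpoint rsum (n : nat) (f : nat -> R) : R :=
  match n with
  | O => 0
  | S n' => rsum n' f + f n'
  end.

Definition mid : mat := fun i j => if Nat.eqb i j then 1 else 0.
Definition mmul (r : nat) (A B : mat) : mat :=
  fun i j => rsum r (fun k => A i k * B k j).
Definition mtr (A : mat) : mat := fun i j => A j i.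

Definition meq (r : nat) (A B : mat) : Prop :=
  forall i j, (i < r)%nat -> (j < r)%nat -> A i j = B i j.

Fixpoint mpow (r : nat) (X : mat) (m : nat) : mat :=
  match m with
  | O => mid
  | S m' => mmul r X (mpow r X m')
  end.

Definition is_mexp (r : nat) (X E : mat) : Prop :=
  forall i j, (i < r)%nat -> (j < r)%nat ->
    Un_cv (fun n => rsum (S n) (fun m => mpow r X m i j / INR (fact m))) (E i j).

Definition minor (A : mat) (j : nat) : mat :=
  fun i k => A (S i) (if Nat.ltb k j then k else S k).
Fixpoint det (n : nat) (A : mat) : R :=
  match n with
  | O => 1
  | S n' => rsum n (fun j => (-1) ^ j * A O j * det n' (minor A j))
  end.

(* T_k : paper's (i,j) entry (r-k-i+1) delta_{j,i+k}; 0-indexed: (r-k-i) delta_{j,i+k} *)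
Definition Tk (r k : nat) : mat :=
  fun i j => if Nat.eqb j (i + k) then INR r - INR k - INR i else 0.
Definition H1 (r : nat) : mat :=
  fun i j => / INR r * Tk r 0 i j - / 2 * mid i j.
Definition H2 (r : nat) : mat :=
  fun i j => mid i j - / INR r * Tk r 0 i j.

Definition in_lie (r : nat) (X : mat) : Prop :=
  exists (a1 a2 : R) (b : nat -> R),
    meq r X (fun i j => a1 * H1 r i j + a2 * H2 r i j
                        + rsum (r - 1) (fun k => b (S k) * Tk r (S k) i j)).

(* G = connected Lie subgroup of GL(r,R) with Lie algebra g, i.e. the subgroup
   generated by exp(g) (finite products of exponentials of elements of g;
   inverses are included since exp(X)^{-1} = exp(-X) with -X in g). *)
Inductive inG (r : nat) : mat -> Prop :=
  | inG_id : inG r mid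
  | inG_mul : forall X E A, in_lie r X -> is_mexp r X E -> inG r A ->
      inG r (mmul r E A).

(* Sub-Hankel matrix with coordinates y_1, ..., y_{r+1} (y : nat -> R, only the
   values at 1..r+1 matter): paper's (i,j) entry is y_{i+j-1} if i+j <= r+2. *)
Definition SH (r : nat) (y : nat -> R) : mat :=
  fun i j => if Nat.leb (i + j) r then y (i + j + 1)%nat else 0.

Definition rho (r : nat) (g A : mat) : mat := mmul r (mmul r g A) (mtr g).

Definition P1 (r : nat) (y : nat -> R) : R := det r (SH r y).
Definition P2 (r : nat) (y : nat -> R) : R := y (r + 1)%nat.

Definition orbit (r : nat) (y y' : nat -> R) : Prop :=
  exists g, inG r g /\ meq r (SH r y') (rho r g (SH r y)).

Definition SH_open (r : nat) (U : (nat -> R) -> Prop) : Prop :=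
  forall y, U y -> exists eps, 0 < eps /\
    forall y', (forall l, (1 <= l <= r + 1)%nat -> Rabs (y' l - y l) < eps) -> U y'.

(* Main.v *)
Require Import Defs.
From Stdlib Require Import Reals Lra Lia FunctionalExtensionality.
From mathcomp Require Import all_boot all_order all_algebra.
From mathcomp Require Import Rstruct zify.
Set Implicit Arguments. Unset Strict Implicit. Unset Printing Implicit Defensive.
Import Order.TTheory GRing.Theory Num.Theory.
Open Scope R_scope.


Lemma rsum_big n f : rsum n f = (\sum_(i < n) f i)%R.
Proof.
elim: n => [|n IH]; first by rewrite big_ord0.
by rewrite big_ord_recr /= IH.
Qed.

Definition tm (n : nat) (A : mat) : 'M[R]_n := (\matrix_(i < n, j < n) A i j)%R.

Lemma tm_mul n A B : tm n (mmul n A B) = (tm n A *m tm n B)%R.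
Proof.
apply/matrixP => i j; rewrite !mxE /mmul rsum_big; apply: eq_bigr => k _.
by rewrite !mxE.
Qed.

Lemma tm_tr n A : tm n (mtr A) = (tm n A)^T%R.
Proof. by apply/matrixP => i j; rewrite !mxE. Qed.

Lemma tm_mid n : tm n mid = 1%:M%R.
Proof.
apply/matrixP => i j; rewrite !mxE /mid.
case: (Nat.eqb_spec i j) => h.
  have -> : i = j by apply: val_inj.
  by rewrite eqxx.
have /negbTE -> : i != j by apply/eqP => e; apply: h; rewrite e.
by [].
Qed.

Lemma meq_tm n A B : meq n A B <-> tm n A = tm n B.
Proof.
split.
  move=> h; apply/matrixP => i j; rewrite !mxE; apply: h; exact/ssrnat.ltP/ltn_ord.
move=> h i j hi hj; move/ssrnat.ltP: hi => hi; move/ssrnat.ltP: hj => hj.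
have := congr1 (fun M : 'M_n => M (Ordinal hi) (Ordinal hj)) h.
by rewrite !mxE.
Qed.

Lemma det_bridge n A : det n A = (\det (tm n A))%R.
Proof.
elim: n A => [|n IH] A; first by rewrite det_mx00.
rewrite (expand_det_row _ ord0) /det -/det rsum_big.
apply: eq_bigr => j _.
rewrite IH /cofactor !mxE add0n.
have -> : tm n (minor A j) = row' ord0 (col' j (tm n.+1 A)).
  apply/matrixP => k l; rewrite !mxE /minor /=.
  congr (A _ _); rewrite /bump.
  case: (Nat.ltb_spec l j) => h.
    by have /ssrnat.ltP h' := h; rewrite leqNgt h' add0n.
  by have /ssrnat.leP h' := h; rewrite h' add1n.
rewrite !RmultE RpowE /=.
by rewrite [RHS]mulrCA mulrA.
Qed.


Lemma rsum_zero n f : (forall k, (k < n)%nat -> f k = 0) -> rsum n f = 0.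
Proof.
elim: n => [|n IH] h //=.
rewrite IH ?h //; first lra.
by move=> k hk; apply: h; apply: ltnW.
Qed.

Lemma rsum_ext n f g : (forall k, (k < n)%nat -> f k = g k) -> rsum n f = rsum n g.
Proof.
elim: n => [|n IH] h //=.
by rewrite IH ?h // => k hk; apply: h; apply: ltnW.
Qed.

Lemma rsum_single n f i : (i < n)%nat -> (forall k, (k < n)%nat -> k <> i -> f k = 0) ->
  rsum n f = f i.
Proof.
elim: n => [|n IH] // hi h /=.
case: (ltnP i n) => hin.
  have hne : n <> i.
    by move=> e; lia.
  rewrite IH //; first by rewrite (h n) //; lra.
  by move=> k hk; apply: h; apply: ltnW.
have -> : i = n by apply/eqP; rewrite eqn_leq hin -ltnS hi.
rewrite rsum_zero; first lra.
move=> k hk; apply: h; first exact: ltnW.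
by move=> e; lia.
Qed.

Lemma rsum_sumf n f : rsum (S n) f = sum_f_R0 f n.
Proof. by elim: n => [|n IH] /=; [lra| rewrite -IH]. Qed.

Lemma rsum_plus n f g : rsum n (fun k => f k + g k) = rsum n f + rsum n g.
Proof. elim: n => [|n IH] /=; [lra| rewrite IH; lra]. Qed.

Lemma rsum_scal n c f : rsum n (fun k => c * f k) = c * rsum n f.
Proof. elim: n => [|n IH] /=; [lra| rewrite IH; lra]. Qed.

Definition UT (n : nat) (A : mat) := forall i j, (j < i)%nat -> (i < n)%nat -> A i j = 0.

Lemma mid_UT n : UT n mid.
Proof.
move=> i j hji _; rewrite /mid; case: (Nat.eqb_spec i j) => // e.
by rewrite e ltnn in hji.
Qed.

Lemma mmul_UT n A B : UT n A -> UT n B -> UT n (mmul n A B).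
Proof.
move=> hA hB i j hji hi; rewrite /mmul; apply: rsum_zero => k hk.
case: (ltnP k i) => hki.
  by rewrite hA //; lra.
by rewrite (hB k j) ?(leq_trans hji hki) //; lra.
Qed.

Lemma mmul_diag n A B i : (i < n)%nat -> UT n A -> UT n B -> mmul n A B i i = A i i * B i i.
Proof.
move=> hi hA hB; rewrite /mmul (rsum_single hi) // => k hk hne.
case: (ltngtP k i) => hki.
- by rewrite hA //; lra.
- by rewrite (hB k i) //; lra.
- by rewrite hki in hne.
Qed.

Lemma mpow_UT n X m : UT n X -> UT n (mpow n X m).
Proof. move=> hX; elim: m => [|m IH] /=; [exact: mid_UT| exact: mmul_UT]. Qed.

Lemma mpow_diag n X m i : (i < n)%nat -> UT n X -> mpow n X m i i = X i i ^ m.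
Proof.
move=> hi hX; elim: m => [|m IH] /=.
  by rewrite /mid Nat.eqb_refl.
by rewrite mmul_diag // ?IH //; apply: mpow_UT.
Qed.

Lemma mexp_UT n X E : UT n X -> is_mexp n X E ->
  UT n E /\ (forall i, (i < n)%nat -> E i i = exp (X i i)).
Proof.
move=> hX hE; split.
  move=> i j hji hi.
  have hj : (j < n)%nat by apply: ltn_trans hji hi.
  have := hE i j (ssrnat.ltP hi) (ssrnat.ltP hj).
  have -> : (fun n0 => rsum (S n0) (fun m => mpow n X m i j / INR (Factorial.fact m))) = (fun _ => 0).
    apply: functional_extensionality => n0; apply: rsum_zero => k _.
    rewrite (mpow_UT k hX) //; rewrite /Rdiv; lra.
  move=> h; apply: (UL_sequence _ _ _ h).
  by move=> e he; exists 0%nat => n0 _; rewrite /R_dist Rminus_diag Rabs_R0.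
move=> i hi.
have := hE i i (ssrnat.ltP hi) (ssrnat.ltP hi).
have -> : (fun n0 => rsum (S n0) (fun m => mpow n X m i i / INR (Factorial.fact m))) = E1 (X i i).
  apply: functional_extensionality => n0.
  rewrite (@rsum_ext _ _ (fun k => / INR (Factorial.fact k) * X i i ^ k)) ?rsum_sumf //.
  by move=> k _; rewrite mpow_diag // /Rdiv; lra.
move=> h; exact: (UL_sequence _ _ _ h (E1_cvg _)).
Qed.

Lemma lie_UT r X : in_lie r X -> UT r X.
Proof.
move=> [a1 [a2 [b h]]] i j hji hi.
have hj : (j < r)%nat by apply: ltn_trans hji hi.
rewrite h; try exact/ssrnat.ltP.
have hT : forall k, Tk r k i j = 0.
  move=> k; rewrite /Tk; case: (Nat.eqb_spec j (i + k)) => // e.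
  by move: hji; rewrite e ltnNge leq_addr.
have hm : mid i j = 0.
  rewrite /mid; case: (Nat.eqb_spec i j) => // e.
  by move: hji; rewrite e ltnn.
rewrite /H1 /H2 hm !hT rsum_zero; first lra.
by move=> k _; rewrite hT; lra.
Qed.

Lemma inG_UT r g : inG r g -> UT r g /\ (forall i, (i < r)%nat -> 0 < g i i).
Proof.
elim => [|X E A hX hE _ [hA hA']].
  split; first exact: mid_UT.
  by move=> i _; rewrite /mid Nat.eqb_refl; lra.
have [hEU hEd] := mexp_UT (lie_UT hX) hE.
split; first exact: mmul_UT.
move=> i hi; rewrite mmul_diag // hEd //.
apply: Rmult_lt_0_compat; [exact: exp_pos| exact: hA'].
Qed.


Lemma det_UT_pos n g : UT n g -> (forall i, (i < n)%nat -> 0 < g i i) -> 0 < det n g.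
Proof.
move=> hU hd; rewrite det_bridge -det_tr det_trig.
  apply/RltP; apply: prodr_gt0 => i _; rewrite !mxE; apply/RltP; exact: hd.
apply/is_trig_mxP => i j hij; rewrite !mxE; exact: hU.
Qed.

Lemma inG_det_pos r g : inG r g -> 0 < det r g.
Proof. by move=> h; have [hU hd] := inG_UT h; exact: det_UT_pos. Qed.

Lemma orbit_P1 r y y' g : meq r (SH r y') (rho r g (SH r y)) ->
  P1 r y' = det r g * det r g * P1 r y.
Proof.
move=> /meq_tm h; rewrite /P1 !det_bridge h /rho !tm_mul tm_tr !det_mulmx det_tr.
by rewrite !RmultE mulrAC.
Qed.

Lemma SH_val r y i j : (i + j <= r)%nat -> SH r y i j = y (i + j + 1)%nat.
Proof. by move=> h; rewrite /SH; case: (Nat.leb_spec (i + j) r) => //; lia. Qed.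

Lemma SH_zero r y i j : (r < i + j)%nat -> SH r y i j = 0.
Proof. by move=> h; rewrite /SH; case: (Nat.leb_spec (i + j) r) => //; lia. Qed.

Lemma orbit_P2 r y y' g : (2 <= r)%nat -> UT r g -> meq r (SH r y') (rho r g (SH r y)) ->
  P2 r y' = g 1%nat 1%nat * g (r - 1)%nat (r - 1)%nat * P2 r y.
Proof.
move=> hr hU h.
have e := h 1%nat (r - 1)%nat ltac:(lia) ltac:(lia).
rewrite SH_val in e; last lia.
rewrite (_ : (1 + (r - 1) + 1 = r + 1)%nat) in e; last lia.
rewrite /P2 e /rho /mmul (@rsum_single _ _ (r - 1)%nat); last first.
  move=> k hk hne; rewrite /mtr hU; [lra| lia| lia].
  lia.
rewrite (@rsum_single _ _ 1%nat); last first.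
  move=> k hk hne; case: (ltnP k 1) => hk1.
    rewrite hU; [lra|lia|lia].
  rewrite SH_zero; [lra|lia].
  lia.
rewrite /mtr SH_val; last lia.
have -> : (1 + (r - 1) + 1 = r + 1)%nat by lia.
change (y (r + 1)%coq_nat) with (y (r + 1)%N); lra.
Qed.

Lemma orbit_inv r y y' : (2 <= r)%nat -> Defs.orbit r y y' ->
  exists c d, 0 < c /\ 0 < d /\ P1 r y' = c * P1 r y /\ P2 r y' = d * P2 r y.
Proof.
move=> hr [g [hg h]].
have [hU hd] := inG_UT hg.
have hp := inG_det_pos hg.
exists (det r g * det r g), (g 1%nat 1%nat * g (r - 1)%nat (r - 1)%nat).
split; first nra.
split; first by apply: Rmult_lt_0_compat; apply: hd; lia.
split; [exact: orbit_P1 | exact: orbit_P2].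
Qed.


Lemma rsum_first n f : rsum (S n) f = f 0%nat + rsum n (fun k => f (S k)).
Proof. by rewrite !rsum_big big_ord_recl. Qed.

Lemma rsum_swap n p (f : nat -> nat -> R) :
  rsum n (fun a => rsum p (fun m => f a m)) = rsum p (fun m => rsum n (fun a => f a m)).
Proof.
rewrite !rsum_big.
under eq_bigr do rewrite rsum_big.
rewrite exchange_big /=; apply: eq_bigr => i _; by rewrite rsum_big.
Qed.

Lemma rsum_last n f : rsum (S n) f = rsum n f + f n.
Proof. by []. Qed.

Lemma rsum_mulr n c f : rsum n f * c = rsum n (fun k => f k * c).
Proof. elim: n => [|n IH] /=; [lra| rewrite -IH; lra]. Qed.

Lemma rsum_mull n c f : c * rsum n f = rsum n (fun k => c * f k).
Proof. elim: n => [|n IH] /=; [lra| rewrite -IH; lra]. Qed.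

Lemma rsum_extend n N f : (n <= N)%nat -> (forall k, (n <= k)%nat -> (k < N)%nat -> f k = 0) ->
  rsum N f = rsum n f.
Proof.
move=> hnN h; elim: N hnN h => [|N IH] hnN h.
  by have -> : n = 0%nat by lia.
case: (ltnP n N.+1) => hn.
  rewrite /= IH; [rewrite (h N); [lra|lia|lia] | lia | move=> k h1 h2; apply: h; lia].
by have -> : n = N.+1 by lia.
Qed.

Fixpoint ff (kap x : R) (m : nat) : R :=
  match m with O => 1 | S m' => ff kap x m' * (x - INR m' * kap) end.

Lemma ff_shift kap x m : ff kap x (S m) = x * ff kap (x - kap) m.
Proof.
elim: m => [|m IH]; first by rewrite /=; lra.
rewrite -[ff kap x m.+2]/(ff kap x m.+1 * (x - INR m.+1 * kap)) IH.
rewrite -[ff kap (x - kap) m.+1]/(ff kap (x - kap) m * (x - kap - INR m * kap)) S_INR; lra.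
Qed.

Lemma ff_split kap x m p : ff kap x (m + p) = ff kap x m * ff kap (x - INR m * kap) p.
Proof.
elim: p => [|p IH]; first by rewrite addn0 /=; lra.
rewrite addnS /= IH plus_INR; lra.
Qed.

Lemma ff_zero kap x m l : (l < m)%nat -> x - INR l * kap = 0 -> ff kap x m = 0.
Proof.
elim: m => [|m IH] // hl hx /=.
case: (ltnP l m) => h.
  by rewrite IH //; lra.
have e : l = m by lia.
rewrite e in hx; rewrite hx; lra.
Qed.

Definition u (kap x : R) (m : nat) : R := ff kap x m / INR (Factorial.fact m).

Lemma fact_INR_pos m : 0 < INR (Factorial.fact m).
Proof. apply: lt_0_INR; apply/ssrnat.ltP; have := Factorial.lt_O_fact m => /ssrnat.ltP; done. Qed.

Lemma u_rec kap x m : INR (S m) * u kap x (S m) = (x - INR m * kap) * u kap x m.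
Proof.
rewrite /u (_ : Factorial.fact (S m) = (S m * Factorial.fact m)%coq_nat) // mult_INR.
rewrite -[ff kap x m.+1]/(ff kap x m * (x - INR m * kap)).
have h1 := fact_INR_pos m.
have h2 : INR (S m) <> 0 by apply: not_0_INR.
field; split; lra.
Qed.

Lemma u0 kap x : u kap x 0 = 1.
Proof. rewrite /u /=; lra. Qed.

Lemma vander kap a b M :
  rsum (S M) (fun m => u kap a m * u kap b (M - m)) = u kap (a + b) M.
Proof.
elim: M => [|M IH].
  by rewrite /= !u0; lra.
apply: (Rmult_eq_reg_l (INR (S M))); last by apply: not_0_INR.
rewrite u_rec -IH rsum_mull.
have E : forall m, (m <= S M)%nat ->
  INR (S M) * (u kap a m * u kap b (S M - m)) =
  INR m * u kap a m * u kap b (S M - m) + u kap a m * (INR (S M - m) * u kap b (S M - m)).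
  move=> m hm; rewrite minus_INR; last by apply/ssrnat.leP.
  ring.
rewrite (rsum_ext (g := fun m => INR m * u kap a m * u kap b (S M - m)
     + u kap a m * (INR (S M - m) * u kap b (S M - m)))); last first.
  by move=> k hk; apply: E; lia.
rewrite rsum_plus.
have hA : rsum (S (S M)) (fun m => INR m * u kap a m * u kap b (S M - m)) =
    rsum (S M) (fun k => (a - INR k * kap) * u kap a k * u kap b (M - k)).
  rewrite rsum_first (_ : INR 0 = 0) // Rmult_0_l Rmult_0_l Rplus_0_l.
  by apply: rsum_ext => k hk; rewrite -u_rec subSS.
have hB : rsum (S (S M)) (fun m => u kap a m * (INR (S M - m) * u kap b (S M - m))) =
    rsum (S M) (fun k => u kap a k * ((b - INR (M - k) * kap) * u kap b (M - k))).
  rewrite rsum_last subnn (_ : INR 0 = 0) // Rmult_0_l Rmult_0_r Rplus_0_r.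
  apply: rsum_ext => k hk; have -> : (S M - k = S (M - k))%nat by lia.
  by rewrite u_rec.
rewrite hA hB -rsum_plus rsum_mull; apply: rsum_ext => k hk.
rewrite minus_INR; last by apply/ssrnat.leP; lia.
ring.
Qed.


Lemma triangle N (G : nat -> nat -> R) :
  rsum N (fun M => rsum (S M) (fun m => G m (M - m)%nat)) =
  rsum N (fun m => rsum (N - m) (fun m' => G m m')).
Proof.
elim: N => [|N IH] //.
rewrite rsum_last IH rsum_last [RHS]rsum_last subSnn.
rewrite (rsum_ext (f := fun m => rsum (S N - m) (fun m' => G m m'))
   (g := fun m => rsum (N - m) (fun m' => G m m') + G m (N - m)%nat)); last first.
  by move=> m hm; rewrite subSn ?rsum_last //; lia.
rewrite rsum_plus rsum_last subnn /=; lra.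
Qed.

Lemma cauchy N (G : nat -> nat -> R) :
  (forall m m', (N <= m + m')%nat -> G m m' = 0) ->
  rsum N (fun m => rsum N (fun m' => G m m')) =
  rsum N (fun M => rsum (S M) (fun m => G m (M - m)%nat)).
Proof.
move=> h; rewrite triangle; apply: rsum_ext => m hm.
apply: rsum_extend; first lia.
move=> k h1 h2; apply: h; lia.
Qed.

Section Eexp.
Variables (r k : nat) (t : R).
Hypothesis hk : (1 <= k)%nat.

Definition cc (t : R) (i m : nat) : R := t ^ m * u (INR k) (INR r - INR k - INR i) m.

Definition Eexp (t : R) : mat := fun i j =>
  rsum r (fun m => if Nat.eqb j (i + m * k)%nat then cc t i m else 0).

Definition Xexp : mat := fun i j => t * Tk r k i j.

Lemma Xexp_lie : (k <= r - 1)%nat -> in_lie r Xexp.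
Proof.
move=> hkr.
exists 0, 0, (fun n => if Nat.eqb n k then t else 0).
move=> i j hi hj.
rewrite (@rsum_single _ _ (k - 1)%nat); last first.
  move=> l hl hne; case: (Nat.eqb_spec (S l) k) => e; [lia| lra].
  lia.
have -> : S (k - 1) = k by lia.
rewrite Nat.eqb_refl /Xexp; lra.
Qed.

Lemma mpow_Xexp m i j : (i < r)%nat -> (j < r)%nat ->
  mpow r Xexp m i j =
  if Nat.eqb j (i + m * k)%nat then t ^ m * ff (INR k) (INR r - INR k - INR i) m else 0.
Proof.
move=> hi hj; elim: m i hi => [|m IH] i hi.
  rewrite /= /mid; case: (Nat.eqb_spec i j); case: (Nat.eqb_spec j (i + 0 * k)%nat); try lia;
  move=> *; lra.
rewrite [mpow _ _ _]/= /mmul /Xexp /Tk.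
case: (ltnP (i + k) r) => hik.
  rewrite (@rsum_single _ _ (i + k)%nat) //; last first.
    by move=> a ha hne; case: (Nat.eqb_spec a (i + k)) => e; [lia| lra].
  rewrite Nat.eqb_refl IH //.
  have -> : Nat.eqb j (i + k + m * k)%nat = Nat.eqb j (i + m.+1 * k)%nat.
    by rewrite mulSn addnA.
  case: (Nat.eqb_spec j (i + m.+1 * k)) => _; last lra.
  rewrite ff_shift plus_INR /=.
  have -> : INR r - INR k - (INR i + INR k) = INR r - INR k - INR i - INR k by ring.
  ring.
rewrite rsum_zero.
  case: (Nat.eqb_spec j (i + m.+1 * k)) => e //.
  have : (i + k <= j)%nat by rewrite e mulSn addnA leq_addr.
  lia.
move=> a ha; case: (Nat.eqb_spec a (i + k)) => e; [lia| lra].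
Qed.

Lemma Eexp_mexp : is_mexp r Xexp (Eexp t).
Proof.
move=> i j /ssrnat.ltP hi /ssrnat.ltP hj.
move=> e he; exists r => n hn.
have hn' : (r <= n)%nat by apply/ssrnat.leP.
rewrite (@rsum_extend r (S n)); last first.
  move=> m h1 h2; rewrite mpow_Xexp //.
  case: (Nat.eqb_spec j (i + m * k)) => e'; last by rewrite /Rdiv; lra.
  have : (m <= m * k)%nat by rewrite leq_pmulr.
  lia.
  lia.
rewrite (rsum_ext (g := fun m => if Nat.eqb j (i + m * k)%nat then cc t i m else 0)).
  by rewrite /R_dist /Eexp Rminus_diag Rabs_R0.
move=> m hm; rewrite mpow_Xexp //.
case: (Nat.eqb_spec j (i + m * k)) => _; last by rewrite /Rdiv; lra.
rewrite /cc /u /Rdiv; ring.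
Qed.

Lemma rowred (s : R) i (F : nat -> R) : (i < r)%nat ->
  rsum r (fun a => Eexp s i a * F a) =
  rsum (S r) (fun m => if Nat.ltb (i + m * k) r then cc s i m * F (i + m * k)%nat else 0).
Proof.
move=> hi.
rewrite (rsum_ext (g := fun a => rsum r (fun m => (if Nat.eqb a (i + m * k)%nat then cc s i m else 0) * F a))); last first.
  by move=> a ha; rewrite /Eexp rsum_mulr.
rewrite rsum_swap rsum_last.
have -> : Nat.ltb (i + r * k) r = false.
  apply/Nat.ltb_ge; have : (r <= r * k)%nat by rewrite leq_pmulr //; lia.
  move/ssrnat.leP; lia.
rewrite Rplus_0_r; apply: rsum_ext => m hm.
case: (Nat.ltb_spec (i + m * k) r) => h.
  rewrite (@rsum_single _ _ (i + m * k)%nat); last first.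
    by move=> a ha hne; case: (Nat.eqb_spec a (i + m * k)) => e; [lia| lra].
    by apply/ssrnat.ltP.
  by rewrite Nat.eqb_refl.
apply: rsum_zero => a ha; case: (Nat.eqb_spec a (i + m * k)) => e; [lia| lra].
Qed.

Lemma cc_zero s i m : (i < r)%nat -> (i + m * k)%nat = r -> cc s i m = 0.
Proof.
move=> hi e; rewrite /cc /u.
rewrite (@ff_zero _ _ m (m - 1)%nat); first by rewrite /Rdiv; ring.
  have : (1 <= m)%nat.
    case: m e => [|m] e //; lia.
  lia.
have hm : (1 <= m)%nat by case: m e => [|m] e //; lia.
rewrite -e plus_INR mult_INR minus_INR; last by apply/ssrnat.leP.
rewrite /= ; lra.
Qed.

Lemma dropc s i m Z : (i < r)%nat -> ((r < i + m * k)%nat -> Z = 0) ->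
  (if Nat.ltb (i + m * k) r then cc s i m * Z else 0) = cc s i m * Z.
Proof.
move=> hi hZ; case: (Nat.ltb_spec (i + m * k) r) => h //.
case: (ltnP r (i + m * k)) => h2.
  by rewrite hZ //; lra.
rewrite cc_zero //; [lra| lia].
Qed.

Lemma rho_entry g A i j :
  rho r g A i j = rsum r (fun a => g i a * rsum r (fun b => A a b * g j b)).
Proof.
rewrite /rho /mmul /mtr.
rewrite (rsum_ext (g := fun b => rsum r (fun a => g i a * A a b * g j b))); last first.
  by move=> b hb; rewrite rsum_mulr.
rewrite -rsum_swap; apply: rsum_ext => a ha; rewrite rsum_mull; apply: rsum_ext => b hb; ring.
Qed.

Definition YE (s : R) (y : nat -> R) (q : nat) : R :=
  rsum (S r) (fun M => if Nat.leb (q + M * k) r then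
     y (q + M * k + 1)%nat * s ^ M * u (INR k) (2 * INR r - 2 * INR k - INR q) M else 0).

Lemma idx i j m M : (m <= M)%nat -> (i + m * k + (j + (M - m) * k) = i + j + M * k)%nat.
Proof.
move=> h; rewrite mulnBl.
have : (m * k <= M * k)%nat by rewrite leq_mul2r h orbT.
lia.
Qed.

Lemma Eexp_act s y i j : (i < r)%nat -> (j < r)%nat ->
  rho r (Eexp s) (SH r y) i j = YE s y (i + j).
Proof.
move=> hi hj.
rewrite rho_entry rowred //.
rewrite (rsum_ext (g := fun m => rsum (S r) (fun m' =>
   cc s i m * cc s j m' * SH r y (i + m * k)%nat (j + m' * k)%nat))); last first.
  move=> m hm.
  rewrite (rsum_ext (f := fun b => SH r y (i + m * k)%nat b * Eexp s j b)
     (g := fun b => Eexp s j b * SH r y (i + m * k)%nat b)); last by move=> *; ring.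
  rewrite rowred // dropc //.
    rewrite rsum_mull; apply: rsum_ext => m' hm'.
    rewrite dropc //; first ring.
    move=> h; apply: SH_zero; lia.
  move=> h; apply: rsum_zero => m' hm'.
  case: (Nat.ltb_spec (j + m' * k) r) => _; last lra.
  rewrite SH_zero; [ring| lia].
rewrite cauchy; last first.
  move=> m m' h; rewrite SH_zero; first ring.
  have : (r.+1 <= (m + m') * k)%nat by rewrite (leq_trans h) // leq_pmulr.
  rewrite mulnDl; lia.
rewrite /YE; apply: rsum_ext => M hM.
case: (Nat.leb_spec (i + j + M * k) r) => h; last first.
  apply: rsum_zero => m hm; rewrite SH_zero; first ring.
  rewrite idx; lia.
rewrite (rsum_ext (g := fun m => y (i + j + M * k + 1)%nat * s ^ M *
    (u (INR k) (INR r - INR k - INR i) m * u (INR k) (INR r - INR k - INR j) (M - m)))); last first.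
  move=> m hm; rewrite SH_val; last by rewrite idx //; lia.
  rewrite idx; last lia.
  rewrite /cc.
  have -> : s ^ M = s ^ m * s ^ (M - m) by rewrite -pow_add; congr (_ ^ _); lia.
  ring.
rewrite -rsum_mull vander plus_INR; congr (_ * _ * u _ _ _); ring.
Qed.

Definition yE (s : R) (y : nat -> R) : nat -> R := fun l => YE s y (l - 1)%nat.

Lemma YE_big s y q : (r < q)%nat -> YE s y q = 0.
Proof.
move=> h; apply: rsum_zero => M hM.
by case: (Nat.leb_spec (q + M * k) r) => h2 //; lia.
Qed.

Lemma Eexp_act_SH s y : meq r (rho r (Eexp s) (SH r y)) (SH r (yE s y)).
Proof.
move=> i j /ssrnat.ltP hi /ssrnat.ltP hj; rewrite Eexp_act //.
rewrite /SH /yE; case: (Nat.leb_spec (i + j) r) => h.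
  by have -> : (i + j + 1 - 1 = i + j)%nat by lia.
by rewrite YE_big //; lia.
Qed.

Lemma YE_top s y q : (r - k < q)%nat -> (q <= r)%nat -> YE s y q = y (q + 1)%nat.
Proof.
move=> h1 h2; rewrite /YE rsum_first.
rewrite rsum_zero.
  rewrite mul0n addn0; case: (Nat.leb_spec q r) => h; last lia.
  rewrite /u /=; lra.
move=> M hM; case: (Nat.leb_spec (q + M.+1 * k) r) => h //.
have : (k <= M.+1 * k)%nat by rewrite leq_pmull.
lia.
Qed.

Lemma YE_mid s y : (k <= r)%nat ->
  YE s y (r - k)%nat = y (r - k + 1)%nat + y (r + 1)%nat * s * (INR r - INR k).
Proof.
move=> hkr; rewrite /YE (@rsum_extend 2); last first.
  move=> M h1 h2; case: (Nat.leb_spec (r - k + M * k) r) => h //.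
  have : (2 * k <= M * k)%nat by rewrite leq_mul2r; lia.
  lia.
  lia.
rewrite /= mul0n addn0 mul1n.
case: (Nat.leb_spec (r - k) r) => h; last lia.
case: (Nat.leb_spec (r - k + k) r) => h'; last lia.
have -> : (r - k + k + 1 = r + 1)%nat by lia.
rewrite /u /= minus_INR; last by apply/ssrnat.leP.
field.
Qed.

End Eexp.


Lemma ff0 x m : ff 0 x m = x ^ m.
Proof. elim: m => [|m IH] //=; rewrite IH; ring. Qed.

Lemma Eexp_inv r k s : (1 <= k)%nat ->
  meq r (mmul r (Eexp r k s) (Eexp r k (- s))) mid.
Proof.
move=> hk i j /ssrnat.ltP hi /ssrnat.ltP hj.
rewrite /mmul rowred //.
rewrite (rsum_ext (g := fun m => rsum (S r) (fun m' =>
   if Nat.eqb j (i + (m + m') * k)%nat then cc r k s i m * cc r k (- s) (i + m * k) m' else 0)));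
   last first.
  move=> m hm; rewrite dropc //; last first.
    move=> h; apply: rsum_zero => m' hm'.
    by case: (Nat.eqb_spec j (i + m * k + m' * k)) => e; [lia| lra].
  rewrite /Eexp rsum_mull rsum_last.
  have -> : Nat.eqb j (i + (m + r) * k)%nat = false.
    apply/Nat.eqb_neq; have : (r <= r * k)%nat by rewrite leq_pmulr.
    rewrite mulnDl; lia.
  rewrite Rplus_0_r; apply: rsum_ext => m' hm'.
  rewrite mulnDl addnA.
  by case: (Nat.eqb_spec j (i + m * k + m' * k)) => _; lra.
rewrite cauchy; last first.
  move=> m m' h; case: (Nat.eqb_spec j (i + (m + m') * k)) => e //.
  have : (r.+1 <= (m + m') * k)%nat by rewrite (leq_trans h) // leq_pmulr.
  lia.
rewrite rsum_first.
have hz : rsum r (fun M => rsum (S (S M)) (fun m =>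
   if Nat.eqb j (i + (m + (M.+1 - m)) * k)%nat
   then cc r k s i m * cc r k (- s) (i + m * k) (M.+1 - m) else 0)) = 0.
  apply: rsum_zero.
move=> M hM.
rewrite (rsum_ext (g := fun m => if Nat.eqb j (i + M.+1 * k)%nat then
    s ^ M.+1 * ff (INR k) (INR r - INR k - INR i) M.+1 *
    (u 0 1 m * u 0 (-1) (M.+1 - m)) else 0)); last first.
  move=> m hm; have -> : (m + (M.+1 - m) = M.+1)%nat by lia.
  case: (Nat.eqb_spec j (i + M.+1 * k)) => _ //.
  rewrite /cc /u !ff0.
  have hsplit := ff_split (INR k) (INR r - INR k - INR i) m (M.+1 - m).
  rewrite (_ : (m + (M.+1 - m) = M.+1)%nat) in hsplit; last lia.
  rewrite hsplit plus_INR mult_INR.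
  have -> : INR r - INR k - (INR i + INR m * INR k) = INR r - INR k - INR i - INR m * INR k by ring.
  have -> : s ^ M.+1 = s ^ m * s ^ (M.+1 - m) by rewrite -pow_add; congr (_ ^ _); lia.
  have -> : (- s) ^ (M.+1 - m) = (-1) ^ (M.+1 - m) * s ^ (M.+1 - m).
    by rewrite -Rpow_mult_distr; congr (_ ^ _); ring.
  have h1 := fact_INR_pos m; have h2 := fact_INR_pos (M.+1 - m).
  rewrite pow1; field; lra.
case: (Nat.eqb_spec j (i + M.+1 * k)) => _; last by apply: rsum_zero.
rewrite -rsum_mull vander /u ff0 /=; field.
apply: Rgt_not_eq; exact: (fact_INR_pos M.+1).
rewrite hz /= /cc /u /= /mid.
case: (Nat.eqb_spec j); case: (Nat.eqb_spec i j); try lia; move=> *; field.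
Qed.

Definition Ediag r (a b : R) : mat := fun i j =>
  if Nat.eqb i j then exp (a + b * (INR r - INR i)) else 0.
Definition Xdiag r (a b : R) : mat := fun i j =>
  if Nat.eqb i j then a + b * (INR r - INR i) else 0.

Lemma Xdiag_lie r a b : (1 <= r)%nat -> in_lie r (Xdiag r a b).
Proof.
move=> hr.
exists (2 * (a + b * INR r)), (2 * a + b * INR r), (fun _ => 0).
move=> i j hi hj.
rewrite rsum_zero; last by move=> *; lra.
have hr' : INR r <> 0 by apply: not_0_INR; lia.
rewrite /Xdiag /H1 /H2 /Tk /mid (_ : INR 0 = 0) //.
case: (Nat.eqb_spec i j); case: (Nat.eqb_spec j (i + 0)); try lia; move=> *; last lra.
field; lra.
Qed.

Lemma mpow_diagonal r (D : mat) m i j : (i < r)%nat ->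
  (forall i a, i <> a -> D i a = 0) ->
  mpow r D m i j = if Nat.eqb i j then D i i ^ m else 0.
Proof.
move=> hi hD; elim: m i hi => [|m IH] i hi /=.
  by rewrite /mid; case: (Nat.eqb_spec i j).
rewrite /mmul (@rsum_single _ _ i) //; last first.
  by move=> a ha hne; rewrite hD; [lra| lia].
rewrite IH //; case: (Nat.eqb_spec i j) => _; ring.
Qed.

Lemma Ediag_mexp r a b : is_mexp r (Xdiag r a b) (Ediag r a b).
Proof.
move=> i j /ssrnat.ltP hi /ssrnat.ltP hj.
have hD : forall i a0, i <> a0 -> Xdiag r a b i a0 = 0.
  by move=> i0 a0 h; rewrite /Xdiag; case: (Nat.eqb_spec i0 a0).
case: (Nat.eqb_spec i j) => e.
  subst j.
  have -> : (fun n0 => rsum (S n0) (fun m => mpow r (Xdiag r a b) m i i / INR (Factorial.fact m)))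
     = E1 (a + b * (INR r - INR i)).
    apply: functional_extensionality => n0.
    rewrite (@rsum_ext _ _ (fun k => / INR (Factorial.fact k) * (a + b * (INR r - INR i)) ^ k)) ?rsum_sumf //.
    move=> k _; rewrite mpow_diagonal // /Xdiag Nat.eqb_refl /Rdiv; lra.
  by rewrite /Ediag Nat.eqb_refl; apply: E1_cvg.
have -> : (fun n0 => rsum (S n0) (fun m => mpow r (Xdiag r a b) m i j / INR (Factorial.fact m)))
   = (fun _ => 0).
  apply: functional_extensionality => n0; apply: rsum_zero => k _.
  rewrite mpow_diagonal //; case: (Nat.eqb_spec i j) => // _; rewrite /Rdiv; lra.
rewrite /Ediag; case: (Nat.eqb_spec i j) => // _.
by move=> e0 he; exists 0%nat => n0 _; rewrite /R_dist Rminus_diag Rabs_R0.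
Qed.

Definition yD r (a b : R) (y : nat -> R) : nat -> R :=
  fun l => exp (2 * a + b * (2 * INR r - INR (l - 1))) * y l.

Lemma Ediag_act r a b y : meq r (rho r (Ediag r a b) (SH r y)) (SH r (yD r a b y)).
Proof.
move=> i j /ssrnat.ltP hi /ssrnat.ltP hj.
rewrite (rho_entry r) (@rsum_single _ _ i) //; last first.
  by move=> a0 ha hne; rewrite /Ediag; case: (Nat.eqb_spec i a0) => e; [lia| lra].
rewrite (@rsum_single _ _ j) //; last first.
  by move=> b0 hb hne; rewrite /Ediag; case: (Nat.eqb_spec j b0) => e; [lia| lra].
rewrite /Ediag !Nat.eqb_refl /SH /yD.
case: (Nat.leb_spec (i + j) r) => h; last lra.
rewrite (_ : (i + j + 1 - 1 = i + j)%nat); last lia.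
rewrite plus_INR.
have -> : exp (2 * a + b * (2 * INR r - (INR i + INR j))) =
  exp (a + b * (INR r - INR i)) * exp (a + b * (INR r - INR j)).
  by rewrite -exp_plus; congr exp; ring.
ring.
Qed.

Lemma Ediag_inv r a b : meq r (mmul r (Ediag r (- a) (- b)) (Ediag r a b)) mid.
Proof.
move=> i j /ssrnat.ltP hi /ssrnat.ltP hj.
rewrite /mmul (@rsum_single _ _ i) //; last first.
  by move=> a0 ha hne; rewrite /Ediag; case: (Nat.eqb_spec i a0) => e; [lia| lra].
rewrite /Ediag /mid Nat.eqb_refl; case: (Nat.eqb_spec i j) => e; last lra.
by rewrite -exp_plus -[RHS]exp_0; congr exp; ring.
Qed.


Definition Gen r (g : mat) : Prop :=
  (exists k t, (1 <= k)%nat /\ (k <= r - 1)%nat /\ g = Eexp r k t) \/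
  (exists a b, g = Ediag r a b).

Inductive inGen (r : nat) : mat -> Prop :=
  | gen_id : inGen r mid
  | gen_mul : forall g A, Gen r g -> inGen r A -> inGen r (mmul r g A).

Lemma inGen_inG r g : (1 <= r)%nat -> inGen r g -> inG r g.
Proof.
move=> hr; elim => [|g0 A hg _ IH]; first exact: inG_id.
case: hg => [[k [t [hk [hkr ->]]]]|[a [b ->]]].
  apply: (@inG_mul r (Xexp r k t)) => //; [exact: Xexp_lie| exact: Eexp_mexp].
apply: (@inG_mul r (Xdiag r a b)) => //; [exact: Xdiag_lie| exact: Ediag_mexp].
Qed.

Lemma Gen_inv r g : Gen r g -> exists h, Gen r h /\ (tm r h *m tm r g = 1%:M)%R.
Proof.
case => [[k [t [hk [hkr ->]]]]|[a [b ->]]].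
  exists (Eexp r k (- t)); split; first by left; exists k, (- t).
  rewrite -tm_mul -tm_mid; apply/meq_tm.
  have := @Eexp_inv r k (- t) hk; by rewrite Ropp_involutive.
exists (Ediag r (- a) (- b)); split; first by right; exists (- a), (- b).
rewrite -tm_mul -tm_mid; apply/meq_tm; exact: Ediag_inv.
Qed.

Lemma inGen_mul r g h : inGen r g -> inGen r h ->
  exists p, inGen r p /\ tm r p = (tm r g *m tm r h)%R.
Proof.
move=> hg hh; elim: hg => [|g0 A hg0 _ [p [hp ep]]].
  by exists h; split => //; rewrite tm_mid mul1mx.
exists (mmul r g0 p); split; first exact: gen_mul.
by rewrite !tm_mul ep mulmxA.
Qed.

Lemma inGen_inv r g : inGen r g -> exists q, inGen r q /\ (tm r q *m tm r g = 1%:M)%R.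
Proof.
elim => [|g0 A hg0 _ [q [hq eq]]].
  by exists mid; split; [exact: gen_id| rewrite tm_mid mul1mx].
have [h0 [hh0 eh0]] := Gen_inv hg0.
have hh0' : inGen r (mmul r h0 mid) by apply: gen_mul => //; exact: gen_id.
have [p [hp ep]] := inGen_mul hq hh0'.
exists p; split => //.
by rewrite ep tm_mul tm_mid mulmx1 tm_mul mulmxA -(mulmxA (tm r q)) eh0 mulmx1.
Qed.

Definition Reach r (A B : 'M[R]_r) : Prop :=
  exists g, inGen r g /\ B = (tm r g *m A *m (tm r g)^T)%R.
Arguments Reach r A B : clear implicits.

Lemma Reach_refl r A : Reach r A A.
Proof. by exists mid; split; [exact: gen_id| rewrite tm_mid mul1mx trmx1 mulmx1]. Qed.

Lemma Reach_trans r A B C : Reach r A B -> Reach r B C -> Reach r A C.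
Proof.
move=> [g [hg ->]] [h [hh ->]].
have [p [hp ep]] := inGen_mul hh hg.
exists p; split => //; by rewrite ep trmx_mul !mulmxA.
Qed.

Lemma Reach_sym r A B : Reach r A B -> Reach r B A.
Proof.
move=> [g [hg ->]].
have [q [hq eq]] := inGen_inv hg.
exists q; split => //.
by rewrite !mulmxA eq mul1mx -mulmxA -trmx_mul eq trmx1 mulmx1.
Qed.

Definition ReachY r y y' := Reach r (tm r (SH r y)) (tm r (SH r y')).

Lemma ReachY_orbit r y y' : (1 <= r)%nat -> ReachY r y y' -> Defs.orbit r y y'.
Proof.
move=> hr [g [hg e]]; exists g; split; first exact: inGen_inG.
by apply/meq_tm; rewrite e /rho !tm_mul tm_tr.
Qed.

Lemma Reach_gen r g y y' : Gen r g -> meq r (rho r g (SH r y)) (SH r y') -> ReachY r y y'.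
Proof.
move=> hg /meq_tm e; exists (mmul r g mid); split.
  by apply: gen_mul => //; exact: gen_id.
by rewrite -e /rho !tm_mul tm_tr tm_mid mulmx1.
Qed.

Lemma SH_agree r y y' : (forall l, (1 <= l)%nat -> (l <= r + 1)%nat -> y l = y' l) -> SH r y = SH r y'.
Proof.
move=> h; apply: functional_extensionality => i; apply: functional_extensionality => j.
rewrite /SH; case: (Nat.leb_spec (i + j) r) => hij //.
by rewrite h //; lia.
Qed.

Lemma ReachY_sym r y y' : ReachY r y y' -> ReachY r y' y.
Proof. exact: Reach_sym. Qed.

Lemma ReachY_trans r y y' y'' : ReachY r y y' -> ReachY r y' y'' -> ReachY r y y''.
Proof. exact: Reach_trans. Qed.

Lemma ReachY_refl r y : ReachY r y y.
Proof. exact: Reach_refl. Qed.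


Lemma elim_step r y k : (2 <= r)%nat -> (1 <= k)%nat -> (k <= r - 1)%nat -> y (r + 1)%nat <> 0 ->
  exists y', ReachY r y y' /\ y' (r + 1)%nat = y (r + 1)%nat /\ y' (r - k + 1)%nat = 0 /\
    (forall l, (r - k + 1 < l)%nat -> (l <= r + 1)%nat -> y' l = y l).
Proof.
move=> hr hk hkr hy.
set t := - y (r - k + 1)%nat / (y (r + 1)%nat * (INR r - INR k)).
exists (yE r k t y); split.
  apply: (@Reach_gen r (Eexp r k t)); first by left; exists k, t.
  exact: Eexp_act_SH.
split.
  rewrite /yE (_ : (r + 1 - 1 = r)%nat); last lia.
  by rewrite YE_top //; lia.
split.
  rewrite /yE (_ : (r - k + 1 - 1 = r - k)%nat); last lia.
  rewrite YE_mid //; last lia.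
  have hrk : INR r - INR k <> 0.
    have : INR k < INR r by apply: lt_INR; apply/ssrnat.ltP; lia.
    lra.
  rewrite /t; field; split => //.
move=> l h1 h2; rewrite /yE YE_top //; [congr y; lia| lia| lia].
Qed.

Lemma elim_all r y K : (2 <= r)%nat -> (K <= r - 1)%nat -> y (r + 1)%nat <> 0 ->
  exists y', ReachY r y y' /\ y' (r + 1)%nat = y (r + 1)%nat /\
    (forall l, (r - K + 1 <= l)%nat -> (l <= r)%nat -> y' l = 0).
Proof.
move=> hr; elim: K => [|K IH] hK hy.
  exists y; split; first exact: ReachY_refl.
  by split => // l h1 h2; lia.
have [y1 [h1 [e1 z1]]] := IH ltac:(lia) hy.
have hy1 : y1 (r + 1)%nat <> 0 by rewrite e1.
have [y2 [h2 [e2 [z2 k2]]]] := @elim_step r y1 K.+1 hr ltac:(lia) hK hy1.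
exists y2; split; first exact: ReachY_trans h1 h2.
split; first by rewrite e2 e1.
move=> l hl1 hl2.
case: (ltnP (r - K.+1 + 1) l) => hl.
  rewrite k2 //; [apply: z1; lia| lia].
by have -> : l = (r - K.+1 + 1)%nat by lia.
Qed.

Lemma det_S n A : det n.+1 A = rsum n.+1 (fun j => (-1) ^ j * A 0%nat j * det n (minor A j)).
Proof. by []. Qed.

Lemma P1_row0 r y : (1 <= r)%nat -> (forall l, (1 <= l)%nat -> (l <= r)%nat -> y l = 0) -> P1 r y = 0.
Proof.
move=> hr h; rewrite /P1; case: r hr h => [|r'] // _ h.
rewrite det_S; apply: rsum_zero => j hj.
rewrite SH_val; last lia.
rewrite h; [lra| lia| lia].
Qed.

Definition upd1 (y : nat -> R) (v : R) : nat -> R := fun l => if Nat.eqb l 1 then v else y l.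

Lemma minor_upd r y v j : minor (SH r (upd1 y v)) j = minor (SH r y) j.
Proof.
apply: functional_extensionality => i; apply: functional_extensionality => l.
rewrite /minor /SH /upd1.
case: (Nat.leb_spec _ r) => // _.
by case: (Nat.eqb_spec _ 1) => //; lia.
Qed.

Definition Cm r y := det (r - 1) (minor (SH r y) 0).

Lemma P1_affine r y v : (1 <= r)%nat -> P1 r (upd1 y v) = v * Cm r y + P1 r (upd1 y 0).
Proof.
move=> hr; rewrite /P1 /Cm; case: r hr => [|r'] // _.
rewrite !det_S !rsum_first.
have hrest : forall w, rsum r' (fun k => (-1) ^ (S k) * SH r'.+1 (upd1 y w) 0%nat (S k) *
     det r' (minor (SH r'.+1 (upd1 y w)) (S k))) =
   rsum r' (fun k => (-1) ^ (S k) * SH r'.+1 y 0%nat (S k) * det r' (minor (SH r'.+1 y) (S k))).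
  move=> w; apply: rsum_ext => k hk; rewrite minor_upd; congr (_ * _ * _).
  rewrite /SH /upd1; case: (Nat.leb_spec _ _) => // _.
  by case: (Nat.eqb_spec _ 1) => //; lia.
rewrite !hrest !minor_upd.
rewrite (_ : (r'.+1 - 1 = r')%nat); last lia.
rewrite !SH_val; try lia.
rewrite /upd1 /=; ring.
Qed.

Definition zf r (s e : R) : nat -> R :=
  fun l => if Nat.eqb l 1 then s else if Nat.eqb l (r + 1) then e else 0.

Lemma zf_upd r s e : zf r s e = upd1 (zf r 1 e) s.
Proof.
apply: functional_extensionality => l; rewrite /zf /upd1.
by case: (Nat.eqb_spec l 1).
Qed.

Lemma P1_zf r s e : (2 <= r)%nat -> P1 r (zf r s e) = s * Cm r (zf r 1 e).
Proof.
move=> hr; rewrite zf_upd P1_affine; last lia.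
rewrite (@P1_row0 r); first lra.
  lia.
move=> l h1 h2; rewrite /upd1 /zf.
case: (Nat.eqb_spec l 1) => // _; case: (Nat.eqb_spec l 1) => // _.
all: by case: (Nat.eqb_spec l (r + 1)) => //; lia.
Qed.

Lemma sgn_div x : x <> 0 -> (x / Rabs x = 1 \/ x / Rabs x = -1) /\ 0 < x / Rabs x * x.
Proof.
move=> hx; case: (Rcase_abs x) => h.
  rewrite Rabs_left //; split; [right; field; lra| ].
  have -> : x / - x * x = - x by field.
  lra.
rewrite Rabs_right //; split; [left; field; lra|].
have -> : x / x * x = x by field.
lra.
Qed.

Definition sa (w : nat -> R) r := (ln (Rabs (w 1%nat)) - 2 * ln (Rabs (w (r + 1)%nat))) / 2.
Definition sb (w : nat -> R) r := (ln (Rabs (w (r + 1)%nat)) - ln (Rabs (w 1%nat))) / INR r.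

Lemma scale_agree r w : (2 <= r)%nat -> w 1%nat <> 0 -> w (r + 1)%nat <> 0 ->
  (forall l, (2 <= l)%nat -> (l <= r)%nat -> w l = 0) ->
  forall l, (1 <= l)%nat -> (l <= r + 1)%nat ->
  yD r (sa w r) (sb w r) w l = zf r (w 1%nat / Rabs (w 1%nat)) (w (r + 1)%nat / Rabs (w (r + 1)%nat)) l.
Proof.
move=> hr hw1 hwr zw l h1 h2.
have hp : 0 < Rabs (w (r + 1)%nat) by apply: Rabs_pos_lt.
have hq : 0 < Rabs (w 1%nat) by apply: Rabs_pos_lt.
have hr' : INR r <> 0 by apply: not_0_INR; lia.
rewrite /yD /zf.
case: (Nat.eqb_spec l 1) => el.
  subst l; rewrite (_ : INR (1 - 1) = 0) //.
  have -> : 2 * sa w r + sb w r * (2 * INR r - 0) = - ln (Rabs (w 1%nat)).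
    by rewrite /sa /sb; field.
  rewrite exp_Ropp exp_ln //; field; lra.
case: (Nat.eqb_spec l (r + 1)) => el2.
  subst l; rewrite (_ : (r + 1 - 1 = r)%nat); last lia.
  have -> : 2 * sa w r + sb w r * (2 * INR r - INR r) = - ln (Rabs (w (r + 1)%nat)).
    by rewrite /sa /sb; field.
  rewrite exp_Ropp exp_ln //; field; lra.
rewrite zw; [lra| lia| lia].
Qed.

Lemma NF r y : (2 <= r)%nat -> P1 r y <> 0 -> P2 r y <> 0 ->
  exists s e, (s = 1 \/ s = -1) /\ (e = 1 \/ e = -1) /\ 0 < e * P2 r y /\ ReachY r y (zf r s e).
Proof.
move=> hr hP1 hP2.
have [w [hw [ew zw]]] := @elim_all r y (r - 1)%nat hr (leqnn _) hP2.
have hw1 : w 1%nat <> 0.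
  move=> h0.
  have [c [d [hc [hd [e1 _]]]]] := orbit_inv hr (ReachY_orbit (ltac:(lia) : (1 <= r)%nat) hw).
  have : P1 r w = 0.
    apply: P1_row0; first lia.
    move=> l h1 h2; case: (ltnP 1 l) => hl; first by apply: zw; lia.
    by have -> : l = 1%nat by lia.
  rewrite e1 => h; apply: hP1; nra.
have hwr : w (r + 1)%nat <> 0 by rewrite ew.
have zw' : forall l, (2 <= l)%nat -> (l <= r)%nat -> w l = 0 by move=> l h1 h2; apply: zw; lia.
have [hs1 hs2] := sgn_div hw1.
have [he1 he2] := sgn_div hwr.
exists (w 1%nat / Rabs (w 1%nat)), (w (r + 1)%nat / Rabs (w (r + 1)%nat)).
split => //; split => //; split; first by rewrite /P2 -ew.
apply: (ReachY_trans hw); apply: (@ReachY_trans r w (yD r (sa w r) (sb w r) w)).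
  apply: (@Reach_gen r (Ediag r (sa w r) (sb w r))); first by right; exists (sa w r), (sb w r).
  exact: Ediag_act.
rewrite /ReachY (SH_agree (scale_agree hr hw1 hwr zw')).
exact: ReachY_refl.
Qed.

Lemma trans_main r y y' : (2 <= r)%nat -> P1 r y <> 0 -> P2 r y <> 0 ->
  P1 r y * P1 r y' > 0 -> P2 r y * P2 r y' > 0 -> Defs.orbit r y y'.
Proof.
move=> hr h1 h2 h3 h4.
have h1' : P1 r y' <> 0 by move=> e; rewrite e in h3; lra.
have h2' : P2 r y' <> 0 by move=> e; rewrite e in h4; lra.
have [s [e [hs [he [hpe hy]]]]] := NF hr h1 h2.
have [s' [e' [hs' [he' [hpe' hy']]]]] := NF hr h1' h2'.
have ee : e = e'.
  case: he => ?; case: he' => ?; subst => //; nra.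
subst e'.
have [c [d [hc [hd [ec _]]]]] := orbit_inv hr (ReachY_orbit (ltac:(lia) : (1 <= r)%nat) hy).
have [c' [d' [hc' [hd' [ec' _]]]]] := orbit_inv hr (ReachY_orbit (ltac:(lia) : (1 <= r)%nat) hy').
rewrite !P1_zf // in ec ec'.
have ss : s = s'.
  case: hs => hs; case: hs' => hs'; subst s s' => //.
    have : c * P1 r y * P1 r y' = - c' * P1 r y' * P1 r y' by nra.
    nra.
  have : c * P1 r y * P1 r y' = - c' * P1 r y' * P1 r y' by nra.
  nra.
subst s'.
apply: ReachY_orbit; first lia.
exact: ReachY_trans hy (ReachY_sym hy').
Qed.


Definition Jm n : 'M[R]_n := (\matrix_(i < n, j < n) (j == rev_ord i)%:R)%R.

Lemma mulJ n (B : 'M[R]_n) i j : ((B *m Jm n) i j = B i (rev_ord j))%R.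
Proof.
rewrite !mxE (bigD1 (rev_ord j)) //= big1 ?addr0.
  by rewrite mxE rev_ordK eqxx mulr1.
move=> l hl; rewrite mxE.
have /negbTE -> : j != rev_ord l.
  by apply: contra hl => /eqP ->; rewrite rev_ordK.
by rewrite mulr0.
Qed.

Lemma JJ n : (Jm n *m Jm n = 1%:M)%R.
Proof.
apply/matrixP => i j; rewrite mulJ !mxE.
case: (eqVneq i j) => [->|h]; first by rewrite eqxx.
have /negbTE -> : rev_ord j != rev_ord i.
  by apply: contra h => /eqP e; apply/eqP; apply: rev_ord_inj.
by [].
Qed.

Lemma antitri n (B : 'M[R]_n) c :
  (forall i j : 'I_n, (n <= i + j)%N -> B i j = 0%R) ->
  (forall i : 'I_n, B i (rev_ord i) = c) -> (\det B * \det (Jm n) = c ^+ n)%R.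
Proof.
move=> h0 hc; rewrite -det_mulmx -det_tr det_trig.
  rewrite (eq_bigr (fun _ => c)); first by rewrite prodr_const card_ord.
  by move=> i _; rewrite mxE mulJ hc.
apply/is_trig_mxP => i j hij; rewrite mxE mulJ h0 //=.
have := ltn_ord j; lia.
Qed.

Lemma detJ_nz n : (\det (Jm n) != 0)%R.
Proof.
apply/eqP => h; have := congr1 determinant (JJ n).
by rewrite det_mulmx h mul0r det1 => /eqP; rewrite eq_sym oner_eq0.
Qed.

Lemma Cm_nz r y : (2 <= r)%nat -> y (r + 1)%nat <> 0 -> Cm r y <> 0.
Proof.
move=> hr hy; rewrite /Cm det_bridge => h.
have := @antitri (r - 1) (tm (r - 1) (minor (SH r y) 0)) (y (r + 1)%nat).
rewrite h mul0r => e.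
have : (y (r + 1)%nat ^+ (r - 1) == 0)%R.
  rewrite -e //.
    move=> i j hij; rewrite mxE /minor /=; apply: SH_zero; lia.
  move=> i; rewrite mxE /minor /= SH_val /=; last by have := ltn_ord i; lia.
  by congr y; have := ltn_ord i; lia.
by rewrite expf_eq0 => /andP [_ /eqP].
Qed.


Definition box r d (y y' : nat -> R) :=
  forall l, (1 <= l)%nat -> (l <= r + 1)%nat -> Rabs (y' l - y l) < d.

Definition cont r (F : (nat -> R) -> R) := forall y e, 0 < e ->
  exists d, 0 < d /\ forall y', box r d y y' -> Rabs (F y' - F y) < e.

Lemma box_mono r d d' y y' : d <= d' -> box r d y y' -> box r d' y y'.
Proof. by move=> h hb l h1 h2; have := hb l h1 h2; lra. Qed.

Lemma cont_const r c : cont r (fun _ => c).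
Proof.
move=> y e he; exists 1; split; first lra.
by move=> y' _; rewrite Rminus_diag Rabs_R0.
Qed.

Lemma cont_coord r l : (1 <= l)%nat -> (l <= r + 1)%nat -> cont r (fun y => y l).
Proof. by move=> h1 h2 y e he; exists e; split => // y' hb; apply: hb. Qed.

Lemma cont_plus r F G : cont r F -> cont r G -> cont r (fun y => F y + G y).
Proof.
move=> hF hG y e he.
have [d1 [hd1 h1]] := hF y (e / 2) ltac:(lra).
have [d2 [hd2 h2]] := hG y (e / 2) ltac:(lra).
exists (Rmin d1 d2); split; first by apply: Rmin_glb_lt.
move=> y' hb.
have := h1 y' (box_mono (Rmin_l d1 d2) hb).
have := h2 y' (box_mono (Rmin_r d1 d2) hb).
move=> a b.
have := Rabs_triang (F y' - F y) (G y' - G y).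
have -> : F y' - F y + (G y' - G y) = F y' + G y' - (F y + G y) by ring.
lra.
Qed.

Lemma cont_mult r F G : cont r F -> cont r G -> cont r (fun y => F y * G y).
Proof.
move=> hF hG y e he.
set a := Rabs (F y); set b := Rabs (G y).
have ha : 0 <= a by apply: Rabs_pos.
have hb0 : 0 <= b by apply: Rabs_pos.
set e1 := Rmin 1 (e / (a + b + 1)).
have he1 : 0 < e1.
  apply: Rmin_glb_lt; first lra.
  apply: Rdiv_lt_0_compat; lra.
have he1a : e1 <= 1 by apply: Rmin_l.
have he1b : e1 * (a + b + 1) <= e.
  have : e1 <= e / (a + b + 1) by apply: Rmin_r.
  move=> h; have -> : e = e / (a + b + 1) * (a + b + 1) by field; lra.
  apply: Rmult_le_compat_r; lra.
have [d1 [hd1 h1]] := hF y e1 he1.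
have [d2 [hd2 h2]] := hG y e1 he1.
exists (Rmin d1 d2); split; first by apply: Rmin_glb_lt.
move=> y' hb.
have f1 := h1 y' (box_mono (Rmin_l d1 d2) hb).
have f2 := h2 y' (box_mono (Rmin_r d1 d2) hb).
have -> : F y' * G y' - F y * G y = F y' * (G y' - G y) + (F y' - F y) * G y by ring.
apply: Rle_lt_trans (Rabs_triang _ _) _.
rewrite !Rabs_mult.
have hF' : Rabs (F y') <= a + 1.
  have := Rabs_triang (F y' - F y) (F y).
  have -> : F y' - F y + F y = F y' by ring.
  rewrite /a; lra.
have p1 : Rabs (F y') * Rabs (G y' - G y) < (a + 1) * e1.
  apply: (@Rle_lt_trans _ ((a + 1) * Rabs (G y' - G y))).
    apply: Rmult_le_compat_r; [apply: Rabs_pos| lra].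
  apply: Rmult_lt_compat_l; lra.
have p2 : Rabs (F y' - F y) * Rabs (G y) <= e1 * b.
  apply: Rmult_le_compat; try apply: Rabs_pos; rewrite /b; lra.
have : (a + 1) * e1 + e1 * b = e1 * (a + b + 1) by ring.
lra.
Qed.

Lemma cont_rsum r n (G : nat -> (nat -> R) -> R) :
  (forall j, cont r (G j)) -> cont r (fun y => rsum n (fun j => G j y)).
Proof.
move=> h; elim: n => [|n IH] /=; first exact: cont_const.
exact: cont_plus.
Qed.

Lemma cont_det r n (A : (nat -> R) -> mat) :
  (forall i j, cont r (fun y => A y i j)) -> cont r (fun y => det n (A y)).
Proof.
elim: n A => [|n IH] A h; first exact: cont_const.
apply: (@cont_rsum r n.+1 (fun j y => (-1) ^ j * A y 0%nat j * det n (minor (A y) j))) => j.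
apply: cont_mult; first by apply: cont_mult; [exact: cont_const| exact: h].
apply: (IH (fun y => minor (A y) j)) => i l; exact: h.
Qed.

Lemma cont_SH r i j : cont r (fun y => SH r y i j).
Proof.
rewrite /SH; case: (Nat.leb_spec (i + j) r) => h.
  apply: cont_coord; lia.
exact: cont_const.
Qed.

Lemma cont_P1 r : cont r (fun y => P1 r y).
Proof. rewrite /P1; apply: (@cont_det r r (fun y => SH r y)) => i j; exact: cont_SH. Qed.

Lemma sign_keep u u' : u <> 0 -> Rabs (u' - u) < Rabs u -> u * u' > 0.
Proof.
move=> hu; case: (Rcase_abs u) => h.
  rewrite (Rabs_left u) //; move=> h'; have := Rle_abs (u' - u); nra.
rewrite (Rabs_right u) //; move=> h'; have := Rle_abs (- (u' - u)); rewrite Rabs_Ropp; nra.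
Qed.

Lemma sign_trans a u u' : a * u > 0 -> u * u' > 0 -> a * u' > 0.
Proof.
move=> h1 h2.
have : (a * u) * (u * u') > 0 by apply: Rmult_lt_0_compat.
have : u * u > 0 by nra.
nra.
Qed.

Lemma sign_open r y0 : SH_open r (fun y' => P1 r y0 * P1 r y' > 0 /\ P2 r y0 * P2 r y' > 0).
Proof.
move=> y [h1 h2].
have hu : P1 r y <> 0 by move=> e; rewrite e in h1; lra.
have hv : P2 r y <> 0 by move=> e; rewrite e in h2; lra.
have [d1 [hd1 hc]] := @cont_P1 r y (Rabs (P1 r y)) (Rabs_pos_lt _ hu).
exists (Rmin d1 (Rabs (P2 r y))); split.
  apply: Rmin_glb_lt => //; exact: Rabs_pos_lt.
move=> y' hb.
have hb' : box r (Rmin d1 (Rabs (P2 r y))) y y' by move=> l a b; apply: hb; lia.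
split.
  apply: (sign_trans h1); apply: sign_keep => //.
  exact: hc (box_mono (Rmin_l _ _) hb').
apply: (sign_trans h2); apply: sign_keep => //.
have := hb' (r + 1)%nat ltac:(lia) (leqnn _).
have := Rmin_r d1 (Rabs (P2 r y)).
move=> a b; rewrite /P2; exact: Rlt_le_trans b a.
Qed.


Lemma density r y eps : (2 <= r)%nat -> 0 < eps ->
  exists y'', box r eps y y'' /\ P1 r y'' <> 0 /\ P2 r y'' <> 0.
Proof.
move=> hr he.
have [w [hw hw2]] : exists w, w <> 0 /\ Rabs (w - y (r + 1)%nat) < eps.
  case: (Req_EM_T (y (r + 1)%nat) 0) => h.
    exists (eps / 2); split; first by move=> e; lra.
    by rewrite h Rminus_0_r Rabs_right; lra.
  by exists (y (r + 1)%nat); split => //; rewrite Rminus_diag Rabs_R0.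
set y1 := fun l => if Nat.eqb l (r + 1) then w else y l.
have hC : Cm r y1 <> 0.
  by apply: Cm_nz => //; rewrite /y1 Nat.eqb_refl.
set K := P1 r (upd1 y1 0).
have [v [hv1 hv2]] : exists v, Rabs (v - y 1%nat) < eps /\ v * Cm r y1 + K <> 0.
  case: (Req_EM_T (y 1%nat * Cm r y1 + K) 0) => h.
    exists (y 1%nat + eps / 2); split.
      have -> : y 1%nat + eps / 2 - y 1%nat = eps / 2 by ring.
      rewrite Rabs_right; lra.
    have -> : (y 1%nat + eps / 2) * Cm r y1 + K = eps / 2 * Cm r y1 by lra.
    apply: Rmult_integral_contrapositive_currified => // e; lra.
  by exists (y 1%nat); split => //; rewrite Rminus_diag Rabs_R0.
exists (upd1 y1 v); split; last split.
- move=> l h1 h2; rewrite /upd1 /y1.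
  case: (Nat.eqb_spec l 1) => e; first by subst l.
  case: (Nat.eqb_spec l (r + 1)) => e2; first by subst l.
  by rewrite Rminus_diag Rabs_R0.
- by rewrite P1_affine; last lia.
- rewrite /P2 /upd1 /y1.
  case: (Nat.eqb_spec (r + 1)%coq_nat 1) => e; first lia.
  by rewrite Nat.eqb_refl.
Qed.

Lemma orbit_refl r y : Defs.orbit r y y.
Proof.
exists mid; split; first exact: inG_id.
by apply/meq_tm; rewrite /rho !tm_mul tm_tr tm_mid mul1mx trmx1 mulmx1.
Qed.

Lemma part1 r (hr : (2 <= r)%nat) y : P1 r y <> 0 -> P2 r y <> 0 ->
  forall y', Defs.orbit r y y' <-> (P1 r y * P1 r y' > 0 /\ P2 r y * P2 r y' > 0).
Proof.
move=> h1 h2 y'; split.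
  move=> ho; have [c [d [hc [hd [e1 e2]]]]] := orbit_inv hr ho.
  rewrite e1 e2; split.
    have : P1 r y * P1 r y > 0 by nra.
    nra.
  have : P2 r y * P2 r y > 0 by nra.
  nra.
by move=> [h3 h4]; apply: trans_main.
Qed.

Lemma orbit_open r (hr : (2 <= r)%nat) y0 : P1 r y0 <> 0 -> P2 r y0 <> 0 ->
  SH_open r (Defs.orbit r y0).
Proof.
move=> h1 h2 y hy.
have [eps [he hS]] := @sign_open r y0 y (proj1 (part1 hr h1 h2 y) hy).
exists eps; split => // y' hb.
by apply/(part1 hr h1 h2); apply: hS.
Qed.

Theorem main_thm (r : nat) (hr : (2 <= r)%nat) :
  (forall y : nat -> R, P1 r y <> 0 -> P2 r y <> 0 ->
     forall y' : nat -> R,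
       Defs.orbit r y y' <-> (P1 r y * P1 r y' > 0 /\ P2 r y * P2 r y' > 0))
  /\ (exists y0 : nat -> R, SH_open r (Defs.orbit r y0))
  /\ (forall y : nat -> R,
        (~ exists y0 : nat -> R, SH_open r (Defs.orbit r y0) /\ Defs.orbit r y0 y)
        <-> P1 r y * P2 r y = 0).
Proof.
split; first exact: part1.
split.
  exists (zf r 1 1); apply: orbit_open => //.
    rewrite P1_zf // Rmult_1_l; apply: Cm_nz => //.
    by rewrite /zf; case: (Nat.eqb_spec (r + 1) 1) => e; [lia| rewrite Nat.eqb_refl; lra].
  rewrite /P2 /zf.
  by case: (Nat.eqb_spec (r + 1)%coq_nat 1) => e; [lia| rewrite Nat.eqb_refl; lra].
move=> y; split.
  move=> hn; case: (Req_EM_T (P1 r y * P2 r y) 0) => // h.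
  exfalso; apply: hn; exists y; split; last exact: orbit_refl.
  apply: orbit_open => // e; apply: h; rewrite e; ring.
move=> h0 [y0 [hop hy]].
have [eps [he hS]] := hop y hy.
have [y'' [hb [n1 n2]]] := density y hr he.
have hy'' : Defs.orbit r y0 y''.
  by apply: hS => l [a b]; apply: hb; lia.
have [c [d [hc [hd [e1 e2]]]]] := orbit_inv hr hy''.
have [c' [d' [hc' [hd' [e1' e2']]]]] := orbit_inv hr hy.
have : P1 r y0 <> 0 by move=> e; apply: n1; rewrite e1 e; ring.
have : P2 r y0 <> 0 by move=> e; apply: n2; rewrite e2 e; ring.
move=> q2 q1.
rewrite e1' e2' in h0.
have : c' * P1 r y0 * (d' * P2 r y0) <> 0.
  repeat apply: Rmult_integral_contrapositive_currified => //; lra.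
by [].
Qed.

Require Import Defs.
Open Scope R_scope.

Theorem proposition1 (r : nat) (hr : (2 <= r)%coq_nat) :
  (forall y : nat -> R, P1 r y <> 0 -> P2 r y <> 0 ->
     forall y' : nat -> R,
       orbit r y y' <-> (P1 r y * P1 r y' > 0 /\ P2 r y * P2 r y' > 0))
  /\ (exists y0 : nat -> R, SH_open r (orbit r y0))
  /\ (forall y : nat -> R,
        (~ exists y0 : nat -> R, SH_open r (orbit r y0) /\ orbit r y0 y)
        <-> P1 r y * P2 r y = 0).
Proof.
apply: main_thm; apply/ssrnat.leP; exact: hr.
Qed.
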